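(* Let $\mathcal{W}=\{W_1,\dots,W_N\}$ be a finite set of $d\times k$ real matrices and let $\mathcal{V}$ be a linear subspace of $\mathbb{S}^d$. Suppose $X_1^\star,\dots,X_N^\star\in\mathbb{S}^k_+$ are such that $X^\star:=\sum_{i=1}^N W_iX_i^\star W_i^T\in\mathcal{V}$ and $\sum_{i=1}^N\operatorname{rank}X_i^\star\ge\sum_{i=1}^N\operatorname{rank}X_i$ for all $X_1,\dots,X_N\in\mathbb{S}^k_+$ with $\sum_{i=1}^N W_iX_iW_i^T\in\mathcal{V}$. Then $\operatorname{rank}X^\star\ge\operatorname{rank}X$ for every $X\in\mathcal{V}\cap\mathcal{C}(\mathcal{W})^*$, where $\mathcal{C}(\mathcal{W})^*=\{\sum_{i=1}^N W_iX_iW_i^T: X_i\in\mathbb{S}^k_+\}$.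
   Context: $\mathbb{S}^d$ is the space of real symmetric $d\times d$ matrices, $\mathbb{S}^k_+$ the cone of $k\times k$ positive semidefinite matrices. *)

(* Defs.v *)
From HB Require Import structures.
From mathcomp Require Import all_boot all_order all_algebra.
Set Implicit Arguments. Unset Strict Implicit. Unset Printing Implicit Defensive.
Import Order.TTheory GRing.Theory Num.Theory.
Local Open Scope ring_scope.

Definition symmx (R : pzRingType) (n : nat) (A : 'M[R]_n) : Prop := A^T = A.

Definition psd (R : realFieldType) (n : nat) (A : 'M[R]_n) : Prop :=
  symmx A /\ forall v : 'cV[R]_n, 0 <= (v^T *m A *m v) 0 0.

Definition Wsum (R : realFieldType) (d k N : nat)
  (W : 'I_N -> 'M[R]_(d, k)) (X : 'I_N -> 'M[R]_k) : 'M[R]_d :=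
  \sum_(i < N) W i *m X i *m (W i)^T.

Definition dualcone (R : realFieldType) (d k N : nat)
  (W : 'I_N -> 'M[R]_(d, k)) (A : 'M[R]_d) : Prop :=
  exists X : 'I_N -> 'M[R]_k, (forall i, psd (X i)) /\ A = Wsum W X.

(* Main.v *)
Require Import Defs.
From HB Require Import structures.
From mathcomp Require Import all_boot all_order all_algebra.
From mathcomp Require Import ring lra zify.
Import Order.TTheory GRing.Theory Num.Theory.
Local Open Scope ring_scope.
Set Implicit Arguments. Unset Strict Implicit.

Section Aux.
Variable R : realFieldType.

Definition qf n (P : 'M[R]_n) (u : 'rV[R]_n) : R := (u *m P *m u^T) 0 0.

Lemma psd_qf n (P : 'M[R]_n) (u : 'rV[R]_n) : psd P -> 0 <= qf P u.
Proof. by case=> _ /(_ u^T); rewrite trmxK. Qed.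

Lemma bil_sym n (P : 'M[R]_n) (u w : 'rV[R]_n) : symmx P ->
  (u *m P *m w^T) 0 0 = (w *m P *m u^T) 0 0.
Proof.
move=> sP; have -> : u *m P *m w^T = (w *m P *m u^T)^T.
  by rewrite !trmx_mul trmxK sP mulmxA.
by rewrite mxE.
Qed.

Lemma qf_expand n (P : 'M[R]_n) (u w : 'rV[R]_n) t : symmx P ->
  qf P (u + t *: w) = qf P u + 2 * t * (w *m P *m u^T) 0 0 + t ^+ 2 * qf P w.
Proof.
move=> sP; rewrite /qf linearD /= linearZ /= !mulmxDl !mulmxDr.
rewrite -!scalemxAl -!scalemxAr ?scalerA.
set a := u *m P *m u^T; set b := u *m P *m w^T; set c := w *m P *m u^T; set e := w *m P *m w^T.
have hbc : b 0 0 = c 0 0 by rewrite /b /c bil_sym.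
clearbody a b c e. rewrite !mxE hbc.
ring.
Qed.

Lemma psd_qf0 n (P : 'M[R]_n) (u : 'rV[R]_n) : psd P -> qf P u = 0 -> u *m P = 0.
Proof.
move=> pP q0.
have key : forall w : 'rV[R]_n, (w *m P *m u^T) 0 0 = 0.
  move=> w; set b := (w *m P *m u^T) 0 0; set c := qf P w.
  have c0 : 0 <= c by exact: psd_qf.
  have s0 : 0 < (c + 1)^-1 by rewrite invr_gt0; lra.
  set s := (c + 1)^-1.
  have hc1 : c + 1 != 0 by rewrite gt_eqF //; lra.
  have hs : s * c + s = 1 by rewrite -[X in _ + X]mulr1 -mulrDr mulVf.
  have := psd_qf (u + (- b * s) *: w) pP.
  rewrite qf_expand; last by case: pP.
  rewrite q0 -/b -/c => h.
  have hb : b ^+ 2 * s * (1 + s) <= 0 by nra.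
  have : b ^+ 2 <= 0 by nra.
  by move=> hb2; apply/eqP; rewrite -sqrf_eq0 eq_le hb2 sqr_ge0.
have : P *m u^T = 0.
  apply/matrixP => i j; rewrite ord1 [RHS]mxE.
  by have := key (delta_mx 0 i); rewrite -mulmxA -rowE mxE.
move=> h; apply: trmx_inj; rewrite trmx_mul; case: pP => sP _; rewrite sP h.
by rewrite trmx0.
Qed.
End Aux.

Lemma rank_ker_le (R : realFieldType) m n (A B : 'M[R]_(m, n)) :
  (forall u : 'rV[R]_m, u *m B = 0 -> u *m A = 0) -> (\rank A <= \rank B)%N.
Proof.
move=> h.
have sub : (kermx B <= kermx A)%MS.
  apply/row_subP => i; apply/sub_kermxP; apply: h; apply/sub_kermxP.
  exact: (submx_trans (row_sub i _) (submx_refl _)).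
have := mxrankS sub; rewrite !mxrank_ker.
have := rank_leq_row A; have := rank_leq_row B. lia.
Qed.

Lemma psd_add (R : realFieldType) n (P Q : 'M[R]_n) : psd P -> psd Q -> psd (P + Q).
Proof.
case=> sP hP [sQ hQ]; split; first by rewrite /symmx linearD /= sP sQ.
move=> v; rewrite mulmxDr mulmxDl mxE addr_ge0 //.
Qed.

Lemma ker_add (R : realFieldType) n (P Q : 'M[R]_n) (u : 'rV[R]_n) :
  psd P -> psd Q -> u *m (P + Q) = 0 -> u *m P = 0 /\ u *m Q = 0.
Proof.
move=> pP pQ h.
have e : qf P u + qf Q u = 0.
  have : (u *m (P + Q) *m u^T) 0 0 = 0 by rewrite h mul0mx mxE.
  by rewrite mulmxDr mulmxDl mxE.
have hp := psd_qf u pP; have hq := psd_qf u pQ.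
split; apply: psd_qf0 => //; lra.
Qed.

Lemma WsumD (R : realFieldType) d k N (W : 'I_N -> 'M[R]_(d, k)) X Y :
  Wsum W (fun i => X i + Y i) = Wsum W X + Wsum W Y.
Proof. by rewrite /Wsum -big_split; apply: eq_bigr => i _; rewrite mulmxDr mulmxDl. Qed.

Lemma mulWsum (R : realFieldType) d k N (W : 'I_N -> 'M[R]_(d, k)) X (u : 'rV[R]_d) :
  u *m Wsum W X = \sum_(i < N) (u *m W i) *m X i *m (W i)^T.
Proof. by rewrite /Wsum mulmx_sumr; apply: eq_bigr => i _; rewrite !mulmxA. Qed.

Lemma sum_le_eq (N : nat) (f g : 'I_N -> nat) :
  (forall i, f i <= g i)%N -> (\sum_(i < N) g i <= \sum_(i < N) f i)%N ->
  forall i, f i = g i.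
Proof.
move=> le sm i; apply/eqP; rewrite eqn_leq le /=.
move: sm; rewrite [X in (X <= _)%N](bigD1 i) //= [X in (_ <= X)%N](bigD1 i) //=.
have : (\sum_(j < N | j != i) f j <= \sum_(j < N | j != i) g j)%N.
  by apply: leq_sum => j _; apply: le.
move=> H1 H2; rewrite -(leq_add2r (\sum_(j < N | j != i) g j)).
apply: (leq_trans H2); rewrite leq_add2l; exact: H1.
Qed.

Theorem lemma6 (R : realFieldType) (d k N : nat)
  (W : 'I_N -> 'M[R]_(d, k))
  (V : {vspace 'M[R]_d})
  (HVsym : forall A : 'M[R]_d, A \in V -> symmx A)
  (Xs : 'I_N -> 'M[R]_k)
  (HXs : forall i, psd (Xs i))
  (HXsV : Wsum W Xs \in V)
  (Hmax : forall X : 'I_N -> 'M[R]_k, (forall i, psd (X i)) -> Wsum W X \in V ->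
            (\sum_(i < N) \rank (X i) <= \sum_(i < N) \rank (Xs i))%N) :
  forall A : 'M[R]_d, A \in V -> dualcone W A -> (\rank A <= \rank (Wsum W Xs))%N.
Proof.
move=> A AV [X [HX eA]]; subst A.
have le1 : forall i, (\rank (Xs i) <= \rank (Xs i + X i)%R)%N.
  move=> i; apply: rank_ker_le => u hu.
  by case: (ker_add (HXs i) (HX i) hu).
have eqr : forall i, \rank (Xs i) = \rank (Xs i + X i)%R.
  apply: sum_le_eq => //; apply: Hmax.
    by move=> i; apply: psd_add.
  by rewrite WsumD memvD.
have kin : forall i (v : 'rV[R]_k), v *m Xs i = 0 -> v *m X i = 0.
  move=> i v hv.
  have sub : (kermx (Xs i + X i)%R <= kermx (Xs i))%MS.
    apply/row_subP => j; apply/sub_kermxP.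
    have /sub_kermxP h := row_sub j (kermx (Xs i + X i)%R).
    by case: (ker_add (HXs i) (HX i) h).
  have : (kermx (Xs i) <= kermx (Xs i + X i)%R)%MS.
    by rewrite -(mxrank_leqif_sup sub) !mxrank_ker eqr.
  move/submx_trans => /(_ _ (kermx (Xs i + X i)%R) (submx_refl _)) _.
  have vin : (v <= kermx (Xs i))%MS by apply/sub_kermxP.
  have : (v <= kermx (Xs i + X i)%R)%MS.
    apply: submx_trans vin _.
    by rewrite -(mxrank_leqif_sup sub) !mxrank_ker eqr.
  move/sub_kermxP => h.
  by case: (ker_add (HXs i) (HX i) h).
apply: rank_ker_le => u hu.
have q0 : \sum_(i < N) qf (Xs i) (u *m W i) = 0.
  have : (u *m Wsum W Xs *m u^T) 0 0 = 0 by rewrite hu mul0mx mxE.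
  rewrite mulWsum mulmx_suml summxE => h; rewrite -[RHS]h.
  by apply: eq_bigr => i _; rewrite /qf trmx_mul mulmxA.
rewrite mulWsum big1 // => i _.
have hq : qf (Xs i) (u *m W i) = 0.
  by apply: (psumr_eq0P _ q0) => // j _; apply: psd_qf.
by rewrite kin ?mul0mx //; apply: psd_qf0.
Qed.
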